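(* If $\mathcal{N}$ is a sound, acyclic, weakly non-deterministic negotiation, then its restriction $\mathcal{N}_D$ to its deterministic processes is sound.
   Context: A negotiation is a tuple $\mathcal{N}=(\mathit{Proc},N,\mathit{dom},R,\delta)$ where $\mathit{Proc}$ is a finite set of processes, $N$ is a finite set of nodes, $\mathit{dom}:N\to 2^{\mathit{Proc}}\setminus\{\emptyset\}$, there are two distinguished nodes $n_{\mathit{init}},n_{\mathit{fin}}$ with $\mathit{dom}(n_{\mathit{init}})=\mathit{dom}(n_{\mathit{fin}})=\mathit{Proc}$, $R$ is a set of results, each node $n$ has a set $\mathit{out}(n)\subseteq R$ of results (nonempty for $n\neq n_{\mathit{fin}}$), and $\delta(n,a,p)\subseteq N$ is defined and nonempty exactly when $a\in\mathit{out}(n)$ and $p\in\mathit{dom}(n)$, with $p\in\mathit{dom}(n')$ for all $n'\in\delta(n,a,p)$. A configuration is a map $C$ assigning to each process a nonempty set of nodes; $C_{\mathit{init}}(p)=\{n_{\mathit{init}}\}$, $C_{\mathit{fin}}(p)=\{n_{\mathit{fin}}\}$. A node $n$ is enabled in $C$ if $n\in C(p)$ for all $p\in\mathit{dom}(n)$. If $n$ is enabled and $a\in\mathit{out}(n)$ then $C\xrightarrow{(n,a)}C'$ with $C'(p)=\delta(n,a,p)$ for $p\in\mathit{dom}(n)$, $C'(p)=C(p)$ otherwise. A run is a sequence of such steps; $\mathcal{N}$ is sound if every finite run from $C_{\mathit{init}}$ can be extended to a finite run ending in $C_{\mathit{fin}}$. The graph of $\mathcal{N}$ has vertex set $N$ and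 edges $n\to n'$ whenever $n'\in\delta(n,a,p)$ for some $a,p$; $\mathcal{N}$ is acyclic if this graph is. A process $p$ is deterministic if $\delta(n,a,p)$ is a singleton for all $n$ with $p\in\mathit{dom}(n)$ and $a\in\mathit{out}(n)$; $\mathcal{N}$ is weakly non-deterministic if every node has a deterministic process in its domain. The restriction of $\mathcal{N}$ to $\mathit{Proc}'\subseteq\mathit{Proc}$ is the negotiation $(\mathit{Proc}',N',\mathit{dom}',R,\delta')$ with $N'=\{n\in N:\mathit{dom}(n)\cap\mathit{Proc}'\neq\emptyset\}$, $\mathit{dom}'(n)=\mathit{dom}(n)\cap\mathit{Proc}'$, $\delta'(n,r,p)=\delta(n,r,p)\cap N'$; $\mathcal{N}_D$ is the restriction to the set of deterministic processes. *)

(* Defs.v *)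
From mathcomp Require Import all_boot.
From Stdlib Require Import Relation_Operators.
Set Implicit Arguments. Unset Strict Implicit. Unset Printing Implicit Defensive.

Section Negotiations.
Variables (P N R : finType).

Record negotiation := Negotiation {
  procs : {set P};
  nodes : {set N};
  dom : N -> {set P};
  ninit : N;
  nfin : N;
  out : N -> {set R};
  delta : N -> R -> P -> {set N}  (* meaningful only when n \in nodes, a \in out n, p \in dom n *)
}.

Definition wf_neg (G : negotiation) : Prop :=
  ninit G \in nodes G /\ nfin G \in nodes G /\
  dom G (ninit G) = procs G /\ dom G (nfin G) = procs G /\
  (forall n, n \in nodes G -> dom G n != set0 /\ dom G n \subset procs G) /\
  (forall n, n \in nodes G -> n != nfin G -> out G n != set0) /\
      (forall n a p, n \in nodes G -> a \in out G n -> p \in dom G n ->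
         [/\ delta G n a p != set0, delta G n a p \subset nodes G &
             forall n', n' \in delta G n a p -> p \in dom G n']).

Definition config := {ffun P -> {set N}}.

Definition C_init (G : negotiation) : config :=
  [ffun p => if p \in procs G then [set ninit G] else set0].
Definition C_fin (G : negotiation) : config :=
  [ffun p => if p \in procs G then [set nfin G] else set0].

Definition enabled (G : negotiation) (C : config) (n : N) : bool :=
  (n \in nodes G) && [forall p in dom G n, n \in C p].

Definition step (G : negotiation) (C C' : config) : Prop :=
  exists n a, [/\ enabled G C n, a \in out G n &
    C' = [ffun p => if p \in dom G n then delta G n a p else C p]].

Definition reachable (G : negotiation) : config -> config -> Prop :=
  clos_refl_trans config (step G).

Definition sound (G : negotiation) : Prop :=
  forall C, reachable G (C_init G) C -> reachable G C (C_fin G).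

Definition edge (G : negotiation) : rel N :=
  fun n n' => (n \in nodes G) &&
    [exists a in out G n, exists p in dom G n, n' \in delta G n a p].

Definition acyclic (G : negotiation) : Prop :=
  forall n n', edge G n n' -> ~~ connect (edge G) n' n.

Definition deterministic (G : negotiation) (p : P) : bool :=
  (p \in procs G) &&
  [forall n in nodes G, (p \in dom G n) ==>
     [forall a in out G n, #|delta G n a p| == 1]].

Definition weakly_nondet (G : negotiation) : Prop :=
  forall n, n \in nodes G -> exists2 p, p \in dom G n & deterministic G p.

Definition restrict (G : negotiation) (Q : {set P}) : negotiation :=
  let N' := [set n in nodes G | dom G n :&: Q != set0] in
  {| procs := Q;
     nodes := N';
     dom := fun n => dom G n :&: Q;
     ninit := ninit G;
     nfin := nfin G;
     out := out G;
     delta := fun n a p => delta G n a p :&: N' |}.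

Definition det_procs (G : negotiation) : {set P} :=
  [set p | deterministic G p].

Definition restrict_det (G : negotiation) : negotiation :=
  restrict G (det_procs G).

End Negotiations.

(* Main.v *)
Require Import Defs.
From mathcomp Require Import all_boot.
From Stdlib Require Import Relation_Operators Operators_Properties.
Set Implicit Arguments. Unset Strict Implicit. Unset Printing Implicit Defensive.

Section Proof.
Variables (P N R : finType) (G : negotiation P N R).

Definition upd (H : negotiation P N R) (X : config P N) n a : config P N :=
  [ffun p => if p \in dom H n then delta H n a p else X p].

Definition stepf (H : negotiation P N R) (f : N -> option R) (X Y : config P N) : Prop :=
  exists n a, [/\ enabled H X n, f n = Some a, a \in out H n & Y = upd H X n a].

Lemma stepf_step H f X Y : stepf H f X Y -> step H X Y.
Proof. by case=> n [a [H1 _ H3 ->]]; exists n, a. Qed.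

Lemma rt_mono (S1 S2 : config P N -> config P N -> Prop) :
  (forall X Y, S1 X Y -> S2 X Y) ->
  forall X Y, clos_refl_trans _ S1 X Y -> clos_refl_trans _ S2 X Y.
Proof.
move=> HS X Y; elim=> [A B /HS H|A|A B C _ IH1 _ IH2].
- exact: rt_step.
- exact: rt_refl.
- exact: rt_trans IH1 IH2.
Qed.

Lemma rt_back (S : config P N -> config P N -> Prop) (e : rel N) :
  (forall Y Z, S Y Z -> forall p x, x \in Z p -> exists2 y, y \in Y p & connect e y x) ->
  forall Y Z, clos_refl_trans _ S Y Z ->
  forall p x, x \in Z p -> exists2 y, y \in Y p & connect e y x.
Proof.
move=> HS Y Z; elim=> {Y Z} [Y Z HYZ|Y|Y Z W _ IH1 _ IH2] p x Hx.
- exact: HS HYZ p x Hx.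
- by exists x.
- have [z Hz Hzx] := IH2 p x Hx. have [y Hy Hyz] := IH1 p z Hz.
  exists y => //. exact: connect_trans Hyz Hzx.
Qed.

Lemma step_back Y Z : step G Y Z ->
  forall p x, x \in Z p -> exists2 y, y \in Y p & connect (edge G) y x.
Proof.
case=> n [a [/andP [Hn /forall_inP Hen] Ha ->]] p x; rewrite ffunE.
case: ifP => Hp Hx; last by exists x.
exists n; first exact: Hen.
apply: connect1; rewrite /edge Hn /=; apply/exists_inP; exists a => //.
by apply/exists_inP; exists p.
Qed.

Lemma stepD_back Y Z : step (restrict_det G) Y Z ->
  forall p x, x \in Z p -> exists2 y, y \in Y p & connect (edge G) y x.
Proof.
case=> n [a [/andP [Hn /forall_inP Hen] Ha ->]] p x; rewrite ffunE /=.
case: ifP => Hp Hx; last by exists x.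
exists n; first exact: Hen.
move: Hn; rewrite /= inE => /andP [Hn _].
move: Hp Hx; rewrite !inE => /andP [Hp _] /andP [Hx _].
apply: connect1; rewrite /edge Hn /=; apply/exists_inP; exists a => //.
by apply/exists_inP; exists p.
Qed.

Hypotheses (Hwf : wf_neg G) (Hs : sound G) (Hac : acyclic G) (Hwn : weakly_nondet G).

Lemma out_fin : out G (nfin G) = set0.
Proof.
apply/eqP; rewrite -subset0; apply/subsetP => b Hb; exfalso.
case: Hwf => Hi [Hf [Hdi [Hdf [Hdom _]]]].
have Hreach : reachable G (C_init G) (C_fin G) by apply: Hs; exact: rt_refl.
pose C1 := upd G (C_fin G) (nfin G) b.
have Hst : step G (C_fin G) C1.
  exists (nfin G), b; split => //.
  rewrite /enabled Hf /=; apply/forall_inP => p; rewrite Hdf => Hp.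
  by rewrite ffunE Hp inE.
have H1 : reachable G C1 (C_fin G).
  by apply: Hs; apply: rt_trans Hreach (rt_step _ _ _ _ Hst).
have [/set0Pn [p Hp] _] := Hdom _ Hf.
have Hp' : p \in procs G by rewrite -Hdf.
have Hx : nfin G \in C_fin G p by rewrite ffunE Hp' inE.
have [y Hy Hyx] := rt_back step_back H1 Hx.
move: Hy; rewrite /C1 /upd ffunE Hp => Hy.
have He : edge G (nfin G) y.
  rewrite /edge Hf /=; apply/exists_inP; exists b => //.
  by apply/exists_inP; exists p.
by move: (Hac He); rewrite Hyx.
Qed.

Definition D := det_procs G.
Definition N' := [set m in nodes G | dom G m :&: D != set0].

Lemma det_single p n a : p \in D -> n \in nodes G -> p \in dom G n -> a \in out G n ->
  exists x, delta G n a p = [set x].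
Proof.
rewrite inE => /andP [_ /forall_inP H] Hn Hp Ha.
by have /implyP /(_ Hp) /forall_inP /(_ a Ha) /cards1P := H n Hn.
Qed.

Lemma delta_N' n a p x : n \in nodes G -> a \in out G n -> p \in dom G n ->
  p \in D -> x \in delta G n a p -> x \in N'.
Proof.
case: Hwf => _ [_ [_ [_ [_ [_ Hd]]]]] Hn Ha Hp HD Hx.
have [_ /subsetP Hsub Hdom'] := Hd n a p Hn Ha Hp.
rewrite inE Hsub //=; apply/set0Pn; exists p; by rewrite inE (Hdom' x Hx) HD.
Qed.

Lemma D_procs p : p \in D -> p \in procs G.
Proof. by rewrite inE => /andP []. Qed.

Definition proj (X : config P N) : config P N :=
  [ffun p => if p \in D then X p else set0].

Definition h x := #|[set y | connect (edge G) x y]|.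

Lemma h_lt x y : edge G x y -> h y < h x.
Proof.
move=> Hxy; apply: proper_card; apply/properP; split.
- apply/subsetP => z; rewrite !inE => Hz; apply: connect_trans Hz.
  exact: connect1.
- exists x; rewrite !inE ?connect0 //. exact: Hac.
Qed.

Definition mu (X : config P N) := \sum_(p : P) \sum_(x in X p) h x.

Lemma stepD_dec X Y : step (restrict_det G) X Y -> mu Y < mu X.
Proof.
case=> n [a [/andP [Hn /forall_inP Hen] Ha ->]].
move: Hn; rewrite /= inE => /andP [Hn /set0Pn [p0 Hp0]].
have Hle : forall p, \sum_(x in upd (restrict_det G) X n a p) h x <= \sum_(x in X p) h x
   /\ (p \in dom G n :&: D -> \sum_(x in upd (restrict_det G) X n a p) h x < \sum_(x in X p) h x).
  move=> p; rewrite /upd ffunE /=.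
  case: ifP => Hp; last by split.
  have Hp' := Hp; move: Hp'; rewrite inE => /andP [Hpd HpD].
  have [x Hx] := det_single HpD Hn Hpd Ha.
  have HxN : x \in N' by apply: (delta_N' Hn Ha Hpd HpD); rewrite Hx set11.
  have -> : delta G n a p :&: N' = [set x].
    by rewrite Hx; apply/setIidPl; rewrite sub1set.
  rewrite big_set1.
  have Hlt : h x < h n.
    apply: h_lt; rewrite /edge Hn /=; apply/exists_inP; exists a => //.
    by apply/exists_inP; exists p => //; rewrite Hx set11.
  have Hn' : h n <= \sum_(y in X p) h y.
    by rewrite (bigD1 n) ?leq_addr //=; exact: Hen.
  have Hlt' := leq_trans Hlt Hn'.
  by split; [exact: ltnW Hlt' | move=> _].
rewrite /mu (bigD1 p0) //= [X in _ < X](bigD1 p0) //=.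
rewrite -addSn; apply: leq_add; first exact: (proj2 (Hle p0) Hp0).
by apply: leq_sum => p _; exact: (proj1 (Hle p)).
Qed.

Definition valid (f : N -> option R) :=
  forall m b, b \in out G m -> exists2 c, f m = Some c & c \in out G m.

Lemma proj_step f C m c : enabled G C m -> f m = Some c -> c \in out G m ->
  stepf (restrict_det G) f (proj C) (proj (upd G C m c)).
Proof.
move=> /andP [Hm /forall_inP Hen] Hf Hc; exists m, c; split => //.
- apply/andP; split.
  + rewrite /= inE Hm /=; have [p Hp Hdet] := Hwn Hm.
    by apply/set0Pn; exists p; rewrite !inE Hp.
  + apply/forall_inP => p; rewrite /= inE => /andP [Hp HpD].
    by rewrite ffunE HpD; apply: Hen.
- apply/ffunP => p; rewrite /upd /proj !ffunE /= in_setI -[det_procs G]/D.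
  case HpD: (p \in D); rewrite ?andbT ?andbF //.
  case: ifP => Hp //.
  apply/esym/setIidPl; apply/subsetP => x; exact: delta_N'.
Qed.

Lemma proj_init : proj (C_init G) = C_init (restrict_det G).
Proof.
apply/ffunP => p; rewrite !ffunE /=.
by case HpD: (p \in D) => //; rewrite D_procs.
Qed.

Lemma proj_fin : proj (C_fin G) = C_fin (restrict_det G).
Proof.
apply/ffunP => p; rewrite !ffunE /=.
by case HpD: (p \in D) => //; rewrite D_procs.
Qed.

Lemma init_Q f : valid f -> forall C, reachable G (C_init G) C ->
  clos_refl_trans _ (stepf (restrict_det G) f) (proj C) (C_fin (restrict_det G)).
Proof.
move=> Hv.
suff H : forall k C, mu (proj C) < k -> reachable G (C_init G) C ->
  clos_refl_trans _ (stepf (restrict_det G) f) (proj C) (C_fin (restrict_det G)).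
  by move=> C; exact: H.
elim=> // k IH C Hk Hr.
case: (eqVneq C (C_fin G)) => [->|Hne]; first by rewrite proj_fin; exact: rt_refl.
have Hr1 := clos_rt_rt1n _ _ _ _ (Hs Hr).
inversion Hr1 as [E|C1 W Hst Hrest]; first by rewrite E eqxx in Hne.
case: Hst => m [b [Hen Hb _]].
have [c Hfc Hc] := Hv m b Hb.
have Hps := proj_step Hen Hfc Hc.
apply: rt_trans (rt_step _ _ _ _ Hps) _.
apply: IH.
- by rewrite -ltnS; apply: leq_trans Hk; apply: stepD_dec; apply: stepf_step Hps.
- apply: rt_trans Hr (rt_step _ _ _ _ _); exists m, c; split => //.
Qed.

Definition Inv (X : config P N) := forall d, d \in D -> exists x, X d = [set x].

Lemma Inv_step X Y : step (restrict_det G) X Y -> Inv X -> Inv Y.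
Proof.
case=> n [a [/andP [Hn /forall_inP Hen] Ha ->]] HI d Hd.
move: Hn; rewrite /= inE => /andP [Hn _].
rewrite ffunE /=; case: ifP => Hp; last exact: HI.
move: Hp; rewrite inE => /andP [Hpd _].
have [x Hx] := det_single Hd Hn Hpd Ha.
have HxN : x \in N' by apply: (delta_N' Hn Ha Hpd Hd); rewrite Hx set11.
exists x; rewrite Hx; apply/setIidPl; by rewrite sub1set.
Qed.

Lemma avoid (f f' : N -> option R) n d :
  (forall m, m != n -> f' m = f m) -> d \in dom G n -> d \in D ->
  forall Y Z, clos_refl_trans _ (stepf (restrict_det G) f') Y Z ->
  (forall y, y \in Y d -> ~~ connect (edge G) y n) ->
  clos_refl_trans _ (stepf (restrict_det G) f) Y Z.
Proof.
move=> Hff Hd HD Y Z; elim=> {Y Z} [Y Z HYZ|Y|Y Z W H1 IH1 _ IH2] HP.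
- apply: rt_step; case: HYZ => m [b [Hen Hf Hb ->]].
  exists m, b; split => //.
  case: (eqVneq m n) => [Emn|Hmn]; last by rewrite -Hff.
  subst m; move: Hen => /andP [_ /forall_inP Hen].
  have Hnd : n \in Y d by apply: Hen; rewrite /= inE Hd HD.
  by move: (HP _ Hnd); rewrite connect0.
- exact: rt_refl.
- apply: rt_trans (IH1 HP) (IH2 _) => z Hz; apply/negP => Hzn.
  have H1' := rt_mono (@stepf_step _ _) H1.
  have [y Hy Hyz] := rt_back stepD_back H1' Hz.
  by move: (HP _ Hy); rewrite (connect_trans Hyz Hzn).
Qed.

Lemma lemmaL f n a : a \in out G n ->
  let f' := fun m => if m == n then Some a else f m in
  forall X, clos_refl_trans _ (stepf (restrict_det G) f') X (C_fin (restrict_det G)) ->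
  Inv X -> enabled (restrict_det G) X n ->
  clos_refl_trans _ (stepf (restrict_det G) f) (upd (restrict_det G) X n a)
     (C_fin (restrict_det G)).
Proof.
move=> Ha f' X HX0; have := clos_rt_rt1n _ _ _ _ HX0; clear HX0.
move Efin: (C_fin (restrict_det G)) => F H.
elim: H Efin => {X} [X|X Y Z HXY HYZ IH] Efin HI Hen.
- subst X; exfalso; move: Hen => /andP [Hn /forall_inP Hen].
  move: Hn; rewrite /= inE => /andP [Hn /set0Pn [d Hd]].
  have := Hen d Hd; rewrite ffunE /=.
  move: Hd; rewrite inE => /andP [_ ->]; rewrite inE => /eqP En.
  by move: Ha; rewrite En out_fin inE.
- case: HXY => m [b [Henm Hfm Hb EY]].
  move: (Hen) => /andP [Hn /forall_inP Hen'].
  move: (Hn); rewrite /= inE => /andP [HnG /set0Pn [d Hd]].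
  have Hd' := Hd; move: Hd'; rewrite inE => /andP [Hdn HdD].
  case: (eqVneq m n) => [Emn|Hmn].
  + subst m; move: Hfm; rewrite /f' eqxx => -[Eb]; subst b.
    rewrite -EY.
    refine (avoid (f' := f') _ Hdn HdD _ _).
    * by move=> m Hm; rewrite /f' (negbTE Hm).
    * exact: clos_rt1n_rt.
    * move=> y; rewrite EY ffunE /= Hd => /setIP [Hy _].
      apply: Hac; rewrite /edge HnG /=; apply/exists_inP; exists a => //.
      by apply/exists_inP; exists d.
  + have Hdisj : forall p, p \in dom G m :&: D -> p \in dom G n :&: D -> False.
      move=> p Hpm Hpn; have Hpd : p \in D by move: Hpn; rewrite inE => /andP [].
      have [x Hx] := HI p Hpd.
      move: Henm => /andP [_ /forall_inP Hm].
      have := Hm p Hpm; have := Hen' p Hpn; rewrite Hx !inE => /eqP En /eqP Emx.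
      by move: Hmn; rewrite Emx En eqxx.
    have HIY : Inv Y by apply: Inv_step HI; rewrite EY; apply: stepf_step; exists m, b.
    have HenY : enabled (restrict_det G) Y n.
      apply/andP; split => //; apply/forall_inP => p Hp.
      rewrite EY ffunE /=; case: ifP => Hpm; last exact: Hen'.
      by exfalso; apply: (Hdisj p Hpm Hp).
    apply: rt_trans _ (IH Efin HIY HenY); apply: rt_step.
    exists m, b; split.
    * move: Henm => /andP [Hm /forall_inP Hm'].
      apply/andP; split => //; apply/forall_inP => p Hp.
      rewrite ffunE /=; case: ifP => Hpn; last exact: Hm'.
      by exfalso; apply: (Hdisj p Hp Hpn).
    * by move: Hfm; rewrite /f' (negbTE Hmn).
    * exact: Hb.
    * rewrite EY; apply/ffunP => p; rewrite !ffunE /=.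
      case: ifP => Hpn; case: ifP => Hpm //.
      by exfalso; apply: (Hdisj p Hpm Hpn).
Qed.

Lemma main_sound : sound (restrict_det G).
Proof.
have Hall : forall X, reachable (restrict_det G) (C_init (restrict_det G)) X ->
  Inv X /\ forall f, valid f ->
    clos_refl_trans _ (stepf (restrict_det G) f) X (C_fin (restrict_det G)).
  move=> X HX0; have := clos_rt_rtn1 _ _ _ _ HX0; clear HX0; elim=> [|Y Z HYZ _ [HI HQ]].
  - split.
    + move=> d Hd; exists (ninit G); by rewrite ffunE /= Hd.
    + move=> f Hv; rewrite -proj_init; exact: (init_Q Hv (rt_refl _ _ _)).
  - split; first exact: Inv_step HYZ HI.
    move=> f Hv; case: (HYZ) => n [a [Hen Ha EZ]].
    pose f' := fun m => if m == n then Some a else f m.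
    have Hv' : valid f'.
      move=> m b Hb; rewrite /f'; case: eqP => [->|_]; last exact: Hv Hb.
      by exists a.
    rewrite EZ; exact: (lemmaL Ha (HQ f' Hv') HI Hen).
move=> X HX; have [_ HQ] := Hall X HX.
pose f0 := fun m => [pick b in out G m].
have Hv0 : valid f0.
  move=> m b Hb; rewrite /f0; case: pickP => [c Hc|H]; first by exists c.
  by move: (H b); rewrite Hb.
exact: rt_mono (@stepf_step _ _) _ _ (HQ f0 Hv0).
Qed.

End Proof.

Theorem lemma4p9 (P N R : finType) (G : negotiation P N R) :
  wf_neg G -> sound G -> acyclic G -> weakly_nondet G ->
  sound (restrict_det G).
Proof. move=> Hwf Hs Hac Hwn; exact: main_sound. Qed.
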